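(* Let $\mathbf m$, $\gamma$, $W_{m,q}$, $W^{(\infty)}_q$, $\mathcal E_{m,\infty}$, $\mathcal E_{\infty,m}$ be as in hypotheses (i), (ii), (iv) below: (i) $W_{m,q}>0$ with $\sup_{(t,s)\in\mathcal S_J}\|\bar U^{(\mathbf m)}(t,s)\mathcal Q\psi^{(\mathbf m)}\|_\omega\le W_{m,q}\|\psi^{(\mathbf m)}\|_\omega$ for all $\psi\in\ell^1_\omega$, and $W_{m,0}>0$ with $\sup_{(t,s)\in\mathcal S_J}\|\bar U^{(\mathbf m)}(t,s)\phi^{(\mathbf m)}\|_\omega\le W_{m,0}\|\phi^{(\mathbf m)}\|_\omega$ for all $\phi\in\ell^1_\omega$; (ii) functions $W^{(\infty)}_q,W^{(\infty)}:\mathcal S_J\to[0,\infty)$ with $\|\bar U^{(\infty)}(t,s)\mathcal Q\psi^{(\infty)}\|_\omega\le W^{(\infty)}_q(t,s)\|\psi^{(\infty)}\|_\omega$ and $\|\bar U^{(\infty)}(t,s)\phi^{(\infty)}\|_\omega\le W^{(\infty)}(t,s)\|\phi^{(\infty)}\|_\omega$ for all $(t,s)\in\mathcal S_J$, $\psi,\phi\in\ell^1_\omega$; (iii) constants $W_\infty>0$, $\overline W_\infty,\overline W'_{\infty,q},\overline{\overline W}{}'_{\infty,q}\ge0$ with $\sup_{\mathcal S_J}W^{(\infty)}(t,s)\le W_\infty$, $\sup_{\mathcal S_J}\int_s^tW^{(\infty)}(r,s)dr\le\overline W_\infty$, $\sup_{\mathcal S_J}\int_s^tW^{(\infty)}_q(t,r)dr\le\overline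 W'_{\infty,q}$, $\sup_{\mathcal S_J}\int_s^t\int_s^rW^{(\infty)}_q(r,\sigma)d\sigma dr\le\overline{\overline W}{}'_{\infty,q}$ and $\sup_{\mathcal S_J}\int_s^tW^{(\infty)}_q(t,r)(r-s)dr\le\overline{\overline W}{}'_{\infty,q}$; (iv) $\mathcal E_{m,\infty},\mathcal E_{\infty,m}\ge0$ with $\sup_{t\in J}\|\Pi^{(\mathbf m)}D\mathcal N(\bar a(t))(I-\Pi^{(\mathbf m)})\|_{B(\ell^1_\omega)}\le\mathcal E_{m,\infty}$ and $\sup_{t\in J}\|(I-\Pi^{(\mathbf m)})D\mathcal N(\bar a(t))\Pi^{(\mathbf m)}\|_{B(\ell^1_\omega)}\le\mathcal E_{\infty,m}$; (v) for every $s\in[0,\tau)$ and $\phi\in\ell^1_\omega$, $b(t)=U(t,s)\phi$ is continuous and bounded on $(s,\tau]$ and its parts satisfy $b^{(\mathbf m)}(t)=\bar U^{(\mathbf m)}(t,s)\phi^{(\mathbf m)}+\int_s^t\bar U^{(\mathbf m)}(t,r)\Pi^{(\mathbf m)}\mathcal QD\mathcal N(\bar a(r))b^{(\infty)}(r)dr$, $b^{(\infty)}(t)=\bar U^{(\infty)}(t,s)\phi^{(\infty)}+\int_s^t\bar U^{(\infty)}(t,r)(I-\Pi^{(\mathbf m)})\mathcal QD\mathcal N(\bar a(r))b^{(\mathbf m)}(r)dr$. If $\tilde\kappa:=1-W_{m,q}\overline{\overline W}{}'_{\infty,q}\mathcal E_{m,\infty}\mathcal E_{\infty,m}>0$, then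 $\sup_{(t,s)\in\mathcal S_J}\|U(t,s)\phi\|_\omega\le\mathbf W\|\phi\|_\omega$ for all $\phi\in\ell^1_\omega$, where $\mathbf W:=\tilde\kappa^{-1}\left\|\begin{pmatrix}W_{m,0}&W_{m,q}\overline W_\infty\mathcal E_{m,\infty}\\ W_{m,0}\overline W'_{\infty,q}\mathcal E_{\infty,m}&W_\infty\end{pmatrix}\right\|_1$ and $\|\cdot\|_1$ is the maximum absolute column sum.
   Context: Standing setting. Fix $d\ge1$ and $L_1,\dots,L_d>0$. Multi-indices are $\mathbf k=(k_1,\dots,k_d)\in\mathbb Z_{\ge0}^d$; inequalities between multi-indices are componentwise. For $\mathbf m=(m_1,\dots,m_d)$ let $F_{\mathbf m}=\{\mathbf k\ge0:\mathbf k<\mathbf m\}$. Let $\alpha_{\mathbf k}=2^{\delta_{k_1,0}}\cdots2^{\delta_{k_d,0}}$ ($\delta$ the Kronecker delta), fix $\nu_F\ge1$, and set $\omega_{\mathbf k}=\alpha_{\mathbf k}\nu_F^{k_1+\cdots+k_d}$. $\ell^1_\omega$ is the Banach space of real sequences $a=(a_{\mathbf k})_{\mathbf k\ge0}$ with $\|a\|_\omega=\sum_{\mathbf k\ge0}|a_{\mathbf k}|\omega_{\mathbf k}<\infty$; $B(\ell^1_\omega)$ denotes bounded operators with the operator norm. Let $(\mathbf{kL})=((k_1L_1)^2+\cdots+(k_dL_d)^2)^{1/2}$. For given real $\lambda_0,\lambda_1,\lambda_2$ let $\mu_{\mathbf k}=\lambda_0-\lambda_1(\mathbf{kL})^2+\lambda_2(\mathbf{kL})^4$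 and let $\mathcal L$ be the diagonal operator $(\mathcal L\phi)_{\mathbf k}=\mu_{\mathbf k}\phi_{\mathbf k}$ with domain $D(\mathcal L)=\{\phi\in\ell^1_\omega:\mathcal L\phi\in\ell^1_\omega\}$. Fix $q\in\{0,2\}$ and let $(\mathcal Q\phi)_{\mathbf k}=\mathrm i^q(\mathbf{kL})^q\phi_{\mathbf k}$ (a real multiplier since $\mathrm i^2=-1$). $\mathcal N:\ell^1_\omega\to\ell^1_\omega$ is Fréchet differentiable with $\mathcal N(0)=0$, $D\mathcal N(0)=0$. $\Pi^{(\mathbf m)}$ is the projection keeping the entries with $\mathbf k\in F_{\mathbf m}$ and setting the others to $0$; $\phi^{(\mathbf m)}=\Pi^{(\mathbf m)}\phi$, $\phi^{(\infty)}=\phi-\phi^{(\mathbf m)}$. Fix $\tau>0$, $J=(0,\tau]$, $X=C(J;\ell^1_\omega)$ with $\|a\|=\sup_{t\in J}\|a(t)\|_\omega$, and a fixed function $\bar a\in X$ (the approximate solution). $\{U(t,s)\}_{0\le s\le t\le\tau}$ is the evolution operator of the linearized problem $\dot b=\mathcal Lb+\mathcal QD\mathcal N(\bar a(t))b$, $b(s)=\phi$, i.e. $U(t,s)\phi=b(t)$. Let $\mathcal S_J=\{(t,s):0<s<t\le\tau\}$. $\mathbf m$ is a multi-index with $\mu_{\mathbf k}<0$ for $\mathbf k\notin F_{\mathbf m}$, and $\gamma\in[0,1)$. Additional notation: $\bar U^{(\mathbf m)}(t,s)$ is the solution operator (time $s$ to time $t$) of the finite-dimensional linear system $\dot c=\mathcal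 Lc+\Pi^{(\mathbf m)}\mathcal QD\mathcal N(\bar a(t))c$ on sequences supported in $F_{\mathbf m}$ (extended by $0$ outside $F_{\mathbf m}$), and $\bar U^{(\infty)}(t,s)$ is the solution operator of $\dot c=\mathcal Lc+(I-\Pi^{(\mathbf m)})\mathcal QD\mathcal N(\bar a(t))c$ on sequences vanishing on $F_{\mathbf m}$; both are linear. *)

(* Defs.v *)
From HB Require Import structures.
From mathcomp Require Import all_boot all_order all_algebra.
From mathcomp Require Import all_classical all_reals all_analysis.
From mathcomp Require Import measurable_realfun.
Set Implicit Arguments. Unset Strict Implicit. Unset Printing Implicit Defensive.
Import Order.TTheory GRing.Theory Num.Theory.
Import numFieldNormedType.Exports.
Local Open Scope classical_set_scope.
Local Open Scope ring_scope.

Definition mindex (d : nat) := {ffun 'I_d -> nat}.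
Definition sq (R : realType) (d : nat) := mindex d -> R.

Section Defs.
Variables (R : realType) (d : nat).

Definition szero : sq R d := fun _ => 0.
Definition sadd (a b : sq R d) : sq R d := fun k => a k + b k.
Definition ssub (a b : sq R d) : sq R d := fun k => a k - b k.
Definition sscale (c : R) (a : sq R d) : sq R d := fun k => c * a k.

Definition alpha (k : mindex d) : R := \prod_(i < d) (if k i == 0%N then 2 else 1).
Definition omega (nuF : R) (k : mindex d) : R := alpha k * nuF ^+ (\sum_(i < d) k i).

Definition wnorm (nuF : R) (a : sq R d) : \bar R :=
  \esum_(k in [set: mindex d]) (`|a k| * omega nuF k)%:E.
Definition inl1w (nuF : R) (a : sq R d) : Prop := (wnorm nuF a < +oo)%E.

Definition inF (m k : mindex d) : bool := [forall i, (k i < m i)%N].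
Definition Pm (m : mindex d) (a : sq R d) : sq R d :=
  fun k => if inF m k then a k else 0.
Definition Pinf (m : mindex d) (a : sq R d) : sq R d := ssub a (Pm m a).

Definition kL2 (L : 'I_d -> R) (k : mindex d) : R :=
  \sum_(i < d) ((k i)%:R * L i) ^+ 2.
Definition mu (l0 l1 l2 : R) (L : 'I_d -> R) (k : mindex d) : R :=
  l0 - l1 * kL2 L k + l2 * (kL2 L k) ^+ 2.
(* (Q phi)_k = i^q (kL)^q phi_k ; for q in {0,2} this is (-(kL)^2)^(q/2) phi_k *)
Definition Qop (q : nat) (L : 'I_d -> R) (a : sq R d) : sq R d :=
  fun k => (- kL2 L k) ^+ (q %/ 2) * a k.

Definition lin_bdd (nuF : R) (T : sq R d -> sq R d) : Prop :=
  (forall x y, inl1w nuF x -> inl1w nuF y -> T (sadd x y) = sadd (T x) (T y)) /\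
  (forall c x, inl1w nuF x -> T (sscale c x) = sscale c (T x)) /\
  exists C : R, forall x, inl1w nuF x ->
    inl1w nuF (T x) /\ (wnorm nuF (T x) <= C%:E * wnorm nuF x)%E.

Definition frechet (nuF : R) (N : sq R d -> sq R d) (DN : sq R d -> sq R d -> sq R d) :
  Prop :=
  forall x, inl1w nuF x ->
    inl1w nuF (N x) /\ lin_bdd nuF (DN x) /\
    forall eps : R, 0 < eps -> exists2 delta : R, 0 < delta &
      forall h, inl1w nuF h -> (wnorm nuF h < delta%:E)%E ->
        (wnorm nuF (ssub (ssub (N (sadd x h)) (N x)) (DN x h))
           <= eps%:E * wnorm nuF h)%E.

Definition wcont_bdd (nuF : R) (f : R -> sq R d) (A : set R) : Prop :=
  (forall t, A t -> inl1w nuF (f t)) /\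
  (forall t, A t -> forall eps : R, 0 < eps -> exists2 delta : R, 0 < delta &
     forall t', A t' -> `|t' - t| < delta ->
       (wnorm nuF (ssub (f t') (f t)) < eps%:E)%E) /\
  (exists C : R, forall t, A t -> (wnorm nuF (f t) <= C%:E)%E).

(* v is the (Bochner) integral over (s,t) of f : R -> ell^1_omega :
   f is strongly measurable (equivalently, every coordinate is Lebesgue
   measurable, ell^1_omega being separable with the coordinates separating),
   int_s^t ||f(r)||_omega dr < oo, and v is computed coordinatewise. *)
Definition bochner (nuF : R) (f : R -> sq R d) (s t : R) (v : sq R d) : Prop :=
  (forall k, measurable_fun `]s, t[ (fun r => f r k)) /\
  (\int[@lebesgue_measure R]_(r in `]s, t[) wnorm nuF (f r) < +oo)%E /\
  (forall k, ((v k)%:E = \int[@lebesgue_measure R]_(r in `]s, t[) (f r k)%:E)%E).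

End Defs.

Definition mx2 (R : pzRingType) (a b c e : R) : 'M[R]_2 :=
  \matrix_(i < 2, j < 2)
    (if i == ord0 then (if j == ord0 then a else b)
     else (if j == ord0 then c else e)).

Definition mxnorm1 (R : realDomainType) (n p : nat) (M : 'M[R]_(n, p)) : R :=
  \big[Num.max/0]_(j < p) \sum_(i < n) `|M i j|.

(* Main.v *)
Require Import Defs.
From HB Require Import structures.
From mathcomp Require Import all_boot all_order all_algebra.
From mathcomp Require Import all_classical all_reals all_analysis.
From mathcomp Require Import measurable_realfun.
From mathcomp Require Import ring lra.
Import Order.TTheory GRing.Theory Num.Theory.
Import numFieldNormedType.Exports.
Local Open Scope classical_set_scope.
Local Open Scope ring_scope.
Section S.
Variables (R : realType) (d : nat) (nuF : R).
Hypothesis nuF0 : 0 <= nuF.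
Local Open Scope ereal_scope.

Lemma omega_ge0 k : (0 <= omega nuF (k : mindex d))%R.
Proof.
rewrite /omega mulr_ge0 ?exprn_ge0 //.
by apply: prodr_ge0 => i _; case: ifP.
Qed.

Lemma wnorm_ge0 (a : sq R d) : 0 <= wnorm nuF a.
Proof. by apply: esum_ge0 => k _; rewrite lee_fin mulr_ge0 ?omega_ge0. Qed.

Lemma wnorm_bochner (f : R -> sq R d) s t v (h : R -> \bar R) :
  bochner nuF f s t v ->
  measurable_fun `]s, t[ h ->
  (forall r, r \in `]s, t[ -> wnorm nuF (f r) <= h r) ->
  wnorm nuF v <= \int[@lebesgue_measure R]_(r in `]s, t[) h r.
Proof.
move=> [mf [_ vE]] mh fh.
have mD : measurable (`]s, t[ : set R) by exact: measurable_itv.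
rewrite /wnorm /esum; apply: ge_ereal_sup => _ [X [finX _] <-].
have mk k : measurable_fun `]s, t[ (fun r => (`|f r k| * omega nuF k)%:E).
  apply/measurable_EFinP; apply: measurable_funM => //.
  exact: measurableT_comp (mf k).
apply: (@le_trans _ _ (\sum_(k \in X) \int[@lebesgue_measure R]_(r in `]s, t[)
          (`|f r k| * omega nuF k)%:E)).
  apply: lee_fsum => // k _.
  rewrite EFinM -abse_EFin vE.
  under [X in _ <= X]eq_integral do rewrite EFinM muleC.
  rewrite ge0_integralZl_EFin ?omega_ge0 //; last first.
    by apply/measurable_EFinP; exact: measurableT_comp (mf k).
  rewrite muleC; apply: lee_wpmul2l; first by rewrite lee_fin omega_ge0.
  under [X in _ <= X]eq_integral do rewrite -abse_EFin.
  apply: le_abse_integral => //.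
  by apply/measurable_EFinP; exact: (mf k).
rewrite -ge0_integral_fsum //; last by move=> k r _; rewrite lee_fin mulr_ge0 ?omega_ge0.
apply: ge0_le_integral => //.
- by move=> r _; apply: fsume_ge0 => k _; rewrite lee_fin mulr_ge0 ?omega_ge0.
- exact: emeasurable_fsum.
- move=> r rD; apply: le_trans (fh r _); last by rewrite inE.
  by apply: ereal_sup_ubound; exists X.
Qed.

Lemma wnorm_split (m : mindex d) (a : sq R d) :
  wnorm nuF a = wnorm nuF (Pm m a) + wnorm nuF (Pinf m a).
Proof.
rewrite /wnorm -esumD; last 2 first.
- by move=> k _; rewrite lee_fin mulr_ge0 ?omega_ge0.
- by move=> k _; rewrite lee_fin mulr_ge0 ?omega_ge0.
apply: eq_esum => k _; rewrite -EFinD; congr (_%:E).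
rewrite /Pinf /ssub /Pm; case: ifP => _.
  by rewrite subrr normr0 mul0r addr0.
by rewrite normr0 subr0 mul0r add0r.
Qed.

Lemma wnorm_Pm_le m (a : sq R d) : wnorm nuF (Pm m a) <= wnorm nuF a.
Proof. by rewrite (wnorm_split m a) leeDl // wnorm_ge0. Qed.

Lemma wnorm_Pinf_le m (a : sq R d) : wnorm nuF (Pinf m a) <= wnorm nuF a.
Proof. by rewrite (wnorm_split m a) leeDr // wnorm_ge0. Qed.

Lemma wnorm_sadd (a b : sq R d) :
  wnorm nuF (sadd a b) <= wnorm nuF a + wnorm nuF b.
Proof.
rewrite /wnorm -esumD; last 2 first.
- by move=> k _; rewrite lee_fin mulr_ge0 ?omega_ge0.
- by move=> k _; rewrite lee_fin mulr_ge0 ?omega_ge0.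
apply: le_esum => k _; rewrite -EFinD lee_fin -mulrDl.
by rewrite ler_wpM2r ?omega_ge0 // ler_normD.
Qed.

Lemma inl1w_Pm m (a : sq R d) : inl1w nuF a -> inl1w nuF (Pm m a).
Proof. by rewrite /inl1w => h; apply: le_lt_trans h; exact: wnorm_Pm_le. Qed.

Lemma inl1w_Pinf m (a : sq R d) : inl1w nuF a -> inl1w nuF (Pinf m a).
Proof. by rewrite /inl1w => h; apply: le_lt_trans h; exact: wnorm_Pinf_le. Qed.

End S.

Arguments omega_ge0 {R d nuF}.
Arguments wnorm_ge0 {R d nuF}.
Arguments wnorm_bochner {R d nuF}.
Arguments wnorm_split {R d nuF}.
Arguments wnorm_Pm_le {R d nuF}.
Arguments wnorm_Pinf_le {R d nuF}.
Arguments wnorm_sadd {R d nuF}.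
Arguments inl1w_Pm {R d nuF}.
Arguments inl1w_Pinf {R d nuF}.

Lemma Pinf_idem (R : realType) d m (a : sq R d) : Pinf m (Pinf m a) = Pinf m a.
Proof.
apply: funext => k; rewrite /Pinf /ssub /Pm; case: ifP => _.
  by rewrite !subrr.
by rewrite !subr0.
Qed.

Lemma Pm_idem (R : realType) d m (a : sq R d) : Pm m (Pm m a) = Pm m a.
Proof. by apply: funext => k; rewrite /Pm; case: (inF m k). Qed.

Lemma Pm_Qop (R : realType) d m q L (a : sq R d) : Pm m (Qop q L a) = Qop q L (Pm m a).
Proof. by apply: funext => k; rewrite /Pm /Qop; case: ifP; rewrite ?mulr0. Qed.

Lemma Pinf_Qop (R : realType) d m q L (a : sq R d) :
  Pinf m (Qop q L a) = Qop q L (Pinf m a).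
Proof.
by apply: funext => k; rewrite /Pinf /ssub /Pm /Qop; case: ifP; rewrite ?subrr ?mulr0 ?subr0.
Qed.

Lemma mx2_col1 (R : realDomainType) (a b c e : R) :
  `|a| + `|c| <= mxnorm1 (mx2 a b c e).
Proof.
apply: le_trans (le_bigmax _ (fun j : 'I_2 => \sum_(i < 2) `|mx2 a b c e i j|) ord0).
by rewrite !big_ord_recr big_ord0 /= !mxE /= add0r.
Qed.

Lemma mx2_col2 (R : realDomainType) (a b c e : R) :
  `|b| + `|e| <= mxnorm1 (mx2 a b c e).
Proof.
apply: le_trans (le_bigmax _ (fun j : 'I_2 => \sum_(i < 2) `|mx2 a b c e i j|) (@ord_max 1)).
by rewrite !big_ord_recr big_ord0 /= !mxE /= add0r.
Qed.

Local Open Scope ereal_scope.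
Lemma int_lin2 (R : realType) (D : set R) (mD : measurable D) (a b : R)
  (F1 F2 : R -> \bar R) : (0 <= a)%R -> (0 <= b)%R ->
  (forall x, D x -> 0 <= F1 x) -> (forall x, D x -> 0 <= F2 x) ->
  measurable_fun D F1 -> measurable_fun D F2 ->
  \int[@lebesgue_measure R]_(x in D) (a%:E * F1 x + b%:E * F2 x) =
  a%:E * \int[@lebesgue_measure R]_(x in D) F1 x +
  b%:E * \int[@lebesgue_measure R]_(x in D) F2 x.
Proof.
move=> a0 b0 F10 F20 mF1 mF2.
rewrite ge0_integralD //; last 4 first.
- by move=> x Dx; rewrite mule_ge0 ?lee_fin // F10.
- exact: measurable_funeM.
- by move=> x Dx; rewrite mule_ge0 ?lee_fin // F20.
- exact: measurable_funeM.
by rewrite !ge0_integralZl_EFin.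
Qed.

Local Close Scope ereal_scope.

Theorem mainTheorem2
  (R : realType) (d : nat) (L : 'I_d -> R) (nuF : R)
  (l0 l1 l2 : R) (q : nat)
  (N : sq R d -> sq R d) (DN : sq R d -> sq R d -> sq R d)
  (tau : R) (abar : R -> sq R d)
  (U Um Uinf : R -> R -> sq R d -> sq R d)
  (m : mindex d) (gamma : R)
  (Wmq Wm0 : R) (Wqinf Winf : R -> R -> R)
  (Winfc Wbar Wbar'q Wbbar'q : R) (Emi Eim : R) :
  (* standing setting *)
  (0 < d)%N -> (forall i, 0 < L i) -> 1 <= nuF -> (q = 0 \/ q = 2)%N ->
  frechet nuF N DN -> N (@szero R d) = @szero R d ->
  (forall x, inl1w nuF x -> DN (@szero R d) x = @szero R d) ->
  0 < tau ->
  wcont_bdd nuF abar `]0, tau] ->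
  (forall k, ~~ inF m k -> mu l0 l1 l2 L k < 0) ->
  0 <= gamma < 1 ->
  (* (i) *)
  0 < Wmq ->
  (forall psi, inl1w nuF psi -> forall t s, 0 < s -> s < t -> t <= tau ->
     (wnorm nuF (Um t s (Qop q L (Pm m psi))) <= Wmq%:E * wnorm nuF (Pm m psi))%E) ->
  0 < Wm0 ->
  (forall phi, inl1w nuF phi -> forall t s, 0 < s -> s < t -> t <= tau ->
     (wnorm nuF (Um t s (Pm m phi)) <= Wm0%:E * wnorm nuF (Pm m phi))%E) ->
  (* (ii) *)
  (forall t s, 0 < s -> s < t -> t <= tau -> 0 <= Wqinf t s /\ 0 <= Winf t s) ->
  (forall t s, 0 < s -> s < t -> t <= tau -> forall psi, inl1w nuF psi ->
     (wnorm nuF (Uinf t s (Qop q L (Pinf m psi))) <= (Wqinf t s)%:E * wnorm nuF (Pinf m psi))%E) ->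
  (forall t s, 0 < s -> s < t -> t <= tau -> forall phi, inl1w nuF phi ->
     (wnorm nuF (Uinf t s (Pinf m phi)) <= (Winf t s)%:E * wnorm nuF (Pinf m phi))%E) ->
  (* (iii) : the integrals below exist (measurability of the integrands) *)
  (forall t s, 0 < s -> s < t -> t <= tau ->
     measurable_fun `]s, t[ (fun r => Winf r s) /\
     measurable_fun `]s, t[ (fun r => Wqinf t r) /\
     measurable_fun `]s, t[
       ((fun r => \int[@lebesgue_measure R]_(sg in `]s, r[) (Wqinf r sg)%:E)%E
         : R -> \bar R)) ->
  0 < Winfc -> 0 <= Wbar -> 0 <= Wbar'q -> 0 <= Wbbar'q ->
  (forall t s, 0 < s -> s < t -> t <= tau -> Winf t s <= Winfc) ->
  (forall t s, 0 < s -> s < t -> t <= tau ->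
     (\int[@lebesgue_measure R]_(r in `]s, t[) (Winf r s)%:E <= Wbar%:E)%E) ->
  (forall t s, 0 < s -> s < t -> t <= tau ->
     (\int[@lebesgue_measure R]_(r in `]s, t[) (Wqinf t r)%:E <= Wbar'q%:E)%E) ->
  (forall t s, 0 < s -> s < t -> t <= tau ->
     (\int[@lebesgue_measure R]_(r in `]s, t[)
        (\int[@lebesgue_measure R]_(sg in `]s, r[) (Wqinf r sg)%:E) <= Wbbar'q%:E)%E) ->
  (forall t s, 0 < s -> s < t -> t <= tau ->
     (\int[@lebesgue_measure R]_(r in `]s, t[) (Wqinf t r * (r - s))%:E
        <= Wbbar'q%:E)%E) ->
  (* (iv) : operator-norm bounds, sup over t in J *)
  0 <= Emi -> 0 <= Eim ->
  (forall t, 0 < t -> t <= tau -> forall x, inl1w nuF x ->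
     (wnorm nuF (Pm m (DN (abar t) (Pinf m x))) <= Emi%:E * wnorm nuF x)%E) ->
  (forall t, 0 < t -> t <= tau -> forall x, inl1w nuF x ->
     (wnorm nuF (Pinf m (DN (abar t) (Pm m x))) <= Eim%:E * wnorm nuF x)%E) ->
  (* (v) *)
  (forall s phi, 0 <= s -> s < tau -> inl1w nuF phi ->
     wcont_bdd nuF (fun t => U t s phi) `]s, tau] /\
     forall t, s < t -> t <= tau ->
       (exists v, bochner nuF
          (fun r => Um t r (Pm m (Qop q L (DN (abar r) (Pinf m (U r s phi)))))) s t v /\
        Pm m (U t s phi) = sadd (Um t s (Pm m phi)) v) /\
       (exists v, bochner nuF
          (fun r => Uinf t r (Pinf m (Qop q L (DN (abar r) (Pm m (U r s phi)))))) s t v /\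
        Pinf m (U t s phi) = sadd (Uinf t s (Pinf m phi)) v)) ->
  (* conclusion *)
  0 < 1 - Wmq * Wbbar'q * Emi * Eim ->
  forall phi, inl1w nuF phi -> forall t s, 0 < s -> s < t -> t <= tau ->
    (wnorm nuF (U t s phi) <=
       ((1 - Wmq * Wbbar'q * Emi * Eim)^-1 *
        mxnorm1 (mx2 Wm0 (Wmq * Wbar * Emi) (Wm0 * Wbar'q * Eim) Winfc))%:E
       * wnorm nuF phi)%E.
Proof.
move=> d0 L0 nuF1 q02 frN N0 DN0 tau0 abarC mu0 gam Wmq0 HUmq Wm00 HUm0 Wnn
  HUiq HUi mW Winfc0 Wbar0 Wbar'q0 Wbbar0 HWinf HWbar HWbar'q HWbb1 HWbb2
  Emi0 Eim0 HEmi HEim HV kap phi phil1 t s s0 st ttau.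
have nuF0 : 0 <= nuF by apply: le_trans nuF1.
have stau : s < tau by apply: lt_le_trans ttau.
have [[Ul1 [_ [C HC]]] HUrep] := HV s phi (ltW s0) stau phil1.
have inS r : s < r -> r <= tau -> [set` `]s, tau]] r by move=> h1 h2; rewrite /= in_itv /= h1 h2.
have Ul1' r : s < r -> r <= tau -> inl1w nuF (U r s phi) by move=> *; apply: Ul1; exact: inS.
have DNl1 r x : 0 < r -> r <= tau -> inl1w nuF x -> inl1w nuF (DN (abar r) x).
  move=> r0 rtau xl1.
  have al1 : inl1w nuF (abar r) by apply: abarC.1; rewrite /= in_itv /= r0 rtau.
  have [_ [[_ [_ [C' HC']]] _]] := frN _ al1.
  exact: (HC' x xl1).1.
have finE (a : sq R d) : inl1w nuF a -> (fine (wnorm nuF a))%:E = wnorm nuF a.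
  by move=> al1; rewrite fineK // ge0_fin_numE // (wnorm_ge0 nuF0).
have fine0 (a : sq R d) : 0 <= fine (wnorm nuF a) by apply: fine_ge0; exact: (wnorm_ge0 nuF0).
set xm := fine (wnorm nuF (Pm m phi)).
set xi := fine (wnorm nuF (Pinf m phi)).
have xmE : wnorm nuF (Pm m phi) = xm%:E by rewrite finE //; exact: (inl1w_Pm nuF0).
have xiE : wnorm nuF (Pinf m phi) = xi%:E by rewrite finE //; exact: (inl1w_Pinf nuF0).
pose bm r := fine (wnorm nuF (Pm m (U r s phi))).
pose bi r := fine (wnorm nuF (Pinf m (U r s phi))).
have bmE r : s < r -> r <= tau -> wnorm nuF (Pm m (U r s phi)) = (bm r)%:E.
  by move=> h1 h2; rewrite /bm finE //; apply: (inl1w_Pm nuF0); exact: Ul1'.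
have biE r : s < r -> r <= tau -> wnorm nuF (Pinf m (U r s phi)) = (bi r)%:E.
  by move=> h1 h2; rewrite /bi finE //; apply: (inl1w_Pinf nuF0); exact: Ul1'.
have lemB t1 (g : R -> \bar R) : s < t1 -> t1 <= tau -> measurable_fun `]s, t1[ g ->
    (forall r, s < r -> r < t1 -> ((bi r)%:E <= g r)%E) ->
    ((bm t1)%:E <= (Wm0 * xm)%:E + (Wmq * Emi)%:E * \int[@lebesgue_measure R]_(r in `]s, t1[) g r)%E.
  move=> st1 t1tau mg hg.
  have [[v [hb hv]] _] := HUrep t1 st1 t1tau.
  rewrite -bmE // hv; apply: le_trans (wnorm_sadd nuF0 _ _) _.
  apply: leeD.
    by rewrite EFinM -xmE; apply: HUm0.
  have g0 r : r \in `]s, t1[ -> (0 <= g r)%E.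
    move=> /[!in_itv] /= /andP[h1 h2]; apply: le_trans (hg r h1 h2).
    by rewrite lee_fin fine0.
  rewrite -ge0_integralZl_EFin //; last by rewrite mulr_ge0 // ltW.
  apply: (wnorm_bochner nuF0 _ _ _ _ (fun r => ((Wmq * Emi)%:E * g r)%E) hb); first exact: measurable_funeM.
  move=> r /[!in_itv] /= /andP[h1 h2].
  have r0 : 0 < r by apply: lt_trans h1.
  have rtau : r <= tau by apply: le_trans (ltW h2) t1tau.
  have psil1 := DNl1 r (Pinf m (U r s phi)) r0 rtau (inl1w_Pinf nuF0 m _ (Ul1' r h1 rtau)).
  rewrite Pm_Qop; apply: le_trans (HUmq _ psil1 t1 r r0 h2 t1tau) _.
  rewrite EFinM -muleA; apply: lee_wpmul2l; first by rewrite lee_fin ltW.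
  rewrite -Pinf_idem.
  apply: le_trans (HEmi r r0 rtau _ (inl1w_Pinf nuF0 m _ (Ul1' r h1 rtau))) _.
  apply: lee_wpmul2l; first by rewrite lee_fin.
  by rewrite biE //; exact: hg.
have lemA t1 (g : R -> \bar R) : s < t1 -> t1 <= tau -> measurable_fun `]s, t1[ g ->
    (forall r, s < r -> r < t1 -> ((bm r)%:E <= g r)%E) ->
    ((bi t1)%:E <= (Winf t1 s * xi)%:E +
       Eim%:E * \int[@lebesgue_measure R]_(r in `]s, t1[) ((Wqinf t1 r)%:E * g r))%E.
  move=> st1 t1tau mg hg.
  have [_ [v [hb hv]]] := HUrep t1 st1 t1tau.
  rewrite -biE // hv; apply: le_trans (wnorm_sadd nuF0 _ _) _.
  apply: leeD.
    by rewrite EFinM -xiE; apply: HUi.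
  have mWq : measurable_fun `]s, t1[ (fun r => (Wqinf t1 r)%:E).
    by apply/measurable_EFinP; exact: (mW t1 s s0 st1 t1tau).2.1.
  have g0 r : r \in `]s, t1[ -> (0 <= (Wqinf t1 r)%:E * g r)%E.
    move=> /[!in_itv] /= /andP[h1 h2]; apply: mule_ge0.
      by rewrite lee_fin; exact: (Wnn t1 r (lt_trans s0 h1) h2 t1tau).1.
    by apply: le_trans (hg r h1 h2); rewrite lee_fin fine0.
  rewrite -ge0_integralZl_EFin //; last exact: emeasurable_funM.
  apply: (wnorm_bochner nuF0 _ _ _ _
     (fun r => (Eim%:E * ((Wqinf t1 r)%:E * g r))%E) hb).
    by apply: measurable_funeM; exact: emeasurable_funM.
  move=> r /[!in_itv] /= /andP[h1 h2].
  have r0 : 0 < r by apply: lt_trans h1.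
  have rtau : r <= tau by apply: le_trans (ltW h2) t1tau.
  have psil1 := DNl1 r (Pm m (U r s phi)) r0 rtau (inl1w_Pm nuF0 m _ (Ul1' r h1 rtau)).
  rewrite Pinf_Qop; apply: le_trans (HUiq t1 r r0 h2 t1tau _ psil1) _.
  rewrite muleCA; apply: lee_wpmul2l.
    by rewrite lee_fin; exact: (Wnn t1 r r0 h2 t1tau).1.
  rewrite -Pm_idem.
  apply: le_trans (HEim r r0 rtau _ (inl1w_Pm nuF0 m _ (Ul1' r h1 rtau))) _.
  apply: lee_wpmul2l; first by rewrite lee_fin.
  by rewrite bmE //; exact: hg.
pose S := [set r : R | s < r /\ r <= tau].
have bm0 r : 0 <= bm r by exact: fine0.
have bi0 r : 0 <= bi r by exact: fine0.
have bmC r : s < r -> r <= tau -> bm r <= C.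
  move=> h1 h2; rewrite -lee_fin -bmE //; apply: le_trans (wnorm_Pm_le nuF0 m _) _.
  by apply: HC; exact: inS.
have biC r : s < r -> r <= tau -> bi r <= C.
  move=> h1 h2; rewrite -lee_fin -biE //; apply: le_trans (wnorm_Pinf_le nuF0 m _) _.
  by apply: HC; exact: inS.
have Sne (f : R -> R) : (f @` S) !=set0 by exists (f tau); exists tau => //; split.
have hsm : has_sup (bm @` S).
  by split => //; exists C => _ [r [h1 h2] <-]; exact: bmC.
have hsi : has_sup (bi @` S).
  by split => //; exists C => _ [r [h1 h2] <-]; exact: biC.
set Mm := sup (bm @` S).
set Mi := sup (bi @` S).
have bmM r : s < r -> r <= tau -> bm r <= Mm.
  by move=> h1 h2; apply: sup_upper_bound => //; exists r.
have biM r : s < r -> r <= tau -> bi r <= Mi.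
  by move=> h1 h2; apply: sup_upper_bound => //; exists r.
have Mmle K : (forall r, s < r -> r <= tau -> bm r <= K) -> Mm <= K.
  by move=> hK; apply: ge_sup => // _ [r [h1 h2] <-]; exact: hK.
have Mile K : (forall r, s < r -> r <= tau -> bi r <= K) -> Mi <= K.
  by move=> hK; apply: ge_sup => // _ [r [h1 h2] <-]; exact: hK.
have Mm0 : 0 <= Mm by apply: le_trans (bmM tau stau (lexx _)).
have Mi0 : 0 <= Mi by apply: le_trans (biM tau stau (lexx _)).
have intc a b (h : a < b) (c : R) :
    (\int[@lebesgue_measure R]_(x in `]a, b[) c%:E = (c * (b - a))%:E)%E.
  transitivity (\int[@lebesgue_measure R]_(x in `]a, b[) (cst c%:E) x)%E; first by [].
  rewrite (@integral_cst _ _ _ (@lebesgue_measure R) `]a, b[ (measurable_itv _) c%:E).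
  rewrite EFinM; congr (_ * _)%E.
  by apply: etrans (lebesgue_measure_itv _) _; rewrite /= lte_fin h -EFinB.
have step1 r : s < r -> r <= tau -> bm r <= Wm0 * xm + Wmq * Emi * Mi * (r - s).
  move=> h1 h2.
  have := lemB r (fun _ => Mi%:E) h1 h2 (measurable_cst _).
  rewrite intc // -EFinM -EFinD lee_fin => H; apply: le_trans (H _) _.
    by move=> r' h1' h2'; rewrite lee_fin; apply: biM => //; exact: ltW (lt_le_trans h2' h2).
  by rewrite !mulrA.
have step1b t1 : s < t1 -> t1 <= tau ->
    bi t1 <= Winfc * xi + Eim * (Wm0 * xm * Wbar'q + Wmq * Emi * Mi * Wbbar'q).
  move=> st1 t1tau.
  have mWq : measurable_fun `]s, t1[ (fun r => Wqinf t1 r) := (mW t1 s s0 st1 t1tau).2.1.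
  have Wq0 r : r \in `]s, t1[ -> 0 <= Wqinf t1 r.
    by move=> /[!in_itv] /= /andP[h1 h2]; exact: (Wnn t1 r (lt_trans s0 h1) h2 t1tau).1.
  have mlin : measurable_fun `]s, t1[ (fun r => Wm0 * xm + Wmq * Emi * Mi * (r - s)).
    apply: measurable_funD => //; apply: measurable_funM => //.
    exact: measurable_funB.
  have := lemA t1 (fun r => (Wm0 * xm + Wmq * Emi * Mi * (r - s))%:E) st1 t1tau.
  move=> /(_ (proj2 (measurable_EFinP _ _) mlin)).
  move=> /(_ (fun r h1 h2 => step1 r h1 (ltW (lt_le_trans h2 t1tau)))).
  move=> H.
  have E : (\int[@lebesgue_measure R]_(r in `]s, t1[)
             ((Wqinf t1 r)%:E * (Wm0 * xm + Wmq * Emi * Mi * (r - s))%:E) =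
          \int[@lebesgue_measure R]_(r in `]s, t1[)
             ((Wm0 * xm)%:E * (Wqinf t1 r)%:E +
              (Wmq * Emi * Mi)%:E * (Wqinf t1 r * (r - s))%:E))%E.
    by apply: eq_integral => r _; rewrite -!EFinM -EFinD; congr EFin; ring.
  rewrite E int_lin2 in H; last 6 first.
  - exact: mulr_ge0 (ltW Wm00) (fine0 _).
  - exact: mulr_ge0 (mulr_ge0 (ltW Wmq0) Emi0) Mi0.
  - by move=> x hx; rewrite lee_fin Wq0.
  - move=> x hx; rewrite lee_fin mulr_ge0 ?Wq0 //.
    by move: hx; rewrite /= in_itv /= => /andP[h1 _]; rewrite subr_ge0 ltW.
  - exact/measurable_EFinP.
  - apply/measurable_EFinP; apply: measurable_funM => //; exact: measurable_funB.
  - rewrite -lee_fin; apply: le_trans H _.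
    rewrite EFinD; apply: leeD.
      by rewrite lee_fin ler_wpM2r ?fine0 // HWinf.
    rewrite [X in (_ <= X)%E]EFinM; apply: lee_wpmul2l; first by rewrite lee_fin.
    rewrite [X in (_ <= X)%E]EFinD; apply: leeD; rewrite [X in (_ <= X)%E]EFinM; apply: lee_wpmul2l.
    + by rewrite lee_fin mulr_ge0 // ?fine0 // ltW.
    + exact: HWbar'q.
    + by rewrite lee_fin !mulr_ge0 // ltW.
    + exact: HWbb2.
  exact: measurable_itv.
pose I r := (\int[@lebesgue_measure R]_(sg in `]s, r[) (Wqinf r sg)%:E)%E.
have I0 r : s < r -> r <= tau -> (0 <= I r)%E.
  move=> h1 h2; apply: integral_ge0 => x; rewrite /= in_itv /= => /andP[h3 h4].
  by rewrite lee_fin; exact: (Wnn r x (lt_trans s0 h3) h4 h2).1.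
have step2 r : s < r -> r <= tau ->
    ((bi r)%:E <= (Winf r s * xi)%:E + (Eim * Mm)%:E * I r)%E.
  move=> h1 h2.
  have := lemA r (fun _ => Mm%:E) h1 h2 (measurable_cst _).
  move=> /(_ (fun r' h1' h2' => bmM r' h1' (ltW (lt_le_trans h2' h2)))) H.
  have E : (\int[@lebesgue_measure R]_(sg in `]s, r[) ((Wqinf r sg)%:E * Mm%:E) =
           Mm%:E * I r)%E.
    under eq_integral do rewrite muleC.
    rewrite ge0_integralZl_EFin //.
    - move=> x; rewrite /= in_itv /= => /andP[h3 h4].
      by rewrite lee_fin; exact: (Wnn r x (lt_trans s0 h3) h4 h2).1.
    - by apply/measurable_EFinP; exact: (mW r s s0 h1 h2).2.1.
  by rewrite E muleA -EFinM in H.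
have step2b t1 : s < t1 -> t1 <= tau ->
    bm t1 <= Wm0 * xm + Wmq * Emi * (xi * Wbar + Eim * Mm * Wbbar'q).
  move=> st1 t1tau.
  have [mWi [_ mI]] := mW t1 s s0 st1 t1tau.
  have := lemB t1 (fun r => (xi%:E * (Winf r s)%:E + (Eim * Mm)%:E * I r)%E) st1 t1tau.
  move=> /(_ (emeasurable_funD (measurable_funeM _ (proj2 (measurable_EFinP _ _) mWi))
                               (measurable_funeM _ mI))).
  move=> /(_ (fun r h1 h2 => ltac:(rewrite -EFinM mulrC;
     exact: (step2 r h1 (ltW (lt_le_trans h2 t1tau)))))) H.
  rewrite int_lin2 in H; last 6 first.
  - exact: fine0.
  - exact: mulr_ge0.
  - move=> x; rewrite /= in_itv /= => /andP[h3 h4].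
    by rewrite lee_fin; exact: (Wnn x s s0 h3 (ltW (lt_le_trans h4 t1tau))).2.
  - move=> x; rewrite /= in_itv /= => /andP[h3 h4].
    exact: (I0 x h3 (ltW (lt_le_trans h4 t1tau))).
  - exact/measurable_EFinP.
  - exact: mI.
  - rewrite -lee_fin; apply: le_trans H _.
    rewrite [X in (_ <= X)%E]EFinD; apply: leeD => //.
    rewrite [X in (_ <= X)%E]EFinM; apply: lee_wpmul2l.
      by rewrite lee_fin mulr_ge0 // ltW.
    rewrite [X in (_ <= X)%E]EFinD; apply: leeD; rewrite [X in (_ <= X)%E]EFinM; apply: lee_wpmul2l.
    + by rewrite lee_fin fine0.
    + exact: HWbar.
    + by rewrite lee_fin mulr_ge0.
    + exact: HWbb1.
  exact: measurable_itv.
have HMm : Mm <= Wm0 * xm + Wmq * Emi * (xi * Wbar + Eim * Mm * Wbbar'q).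
  exact: Mmle _ (fun r h1 h2 => step2b r h1 h2).
have HMi : Mi <= Winfc * xi + Eim * (Wm0 * xm * Wbar'q + Wmq * Emi * Mi * Wbbar'q).
  exact: Mile _ (fun r h1 h2 => step1b r h1 h2).
set k := 1 - Wmq * Wbbar'q * Emi * Eim in kap *.
set mx := mxnorm1 _.
have c1 : Wm0 + Wm0 * Wbar'q * Eim <= mx.
  have := @mx2_col1 R Wm0 (Wmq * Wbar * Emi) (Wm0 * Wbar'q * Eim) Winfc.
  by rewrite !ger0_norm // ?mulr_ge0 // ltW.
have c2 : Wmq * Wbar * Emi + Winfc <= mx.
  have := @mx2_col2 R Wm0 (Wmq * Wbar * Emi) (Wm0 * Wbar'q * Eim) Winfc.
  by rewrite !ger0_norm // ?mulr_ge0 // ltW.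
have xm0 : 0 <= xm := fine0 _.
have xi0 : 0 <= xi := fine0 _.
have e1 := ler_wpM2r xm0 c1.
have e2 := ler_wpM2r xi0 c2.
have kM : k * (Mm + Mi) <= mx * (xm + xi).
  rewrite /k; nra.
rewrite (wnorm_split nuF0 m (U t s phi)) (wnorm_split nuF0 m phi) bmE // biE // xmE xiE -!EFinD -EFinM lee_fin.
apply: le_trans (_ : Mm + Mi <= _).
  by apply: lerD; [exact: bmM | exact: biM].
by rewrite -mulrA ler_pdivlMl.
Qed.
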